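(* Let $r_1, r_2 \geq 2$ be integers. Suppose that for each $i\in\{1,2\}$ the inequality $$\chi\big(KG^{r_i}(n,k,s)\big) \geq \left\lceil \frac{n - r_i(k-s-1)}{r_i-1} \right\rceil$$ holds for all non-negative integers $n,k,s$ satisfying $n \geq r_i(k-1)+1$ and $k > s \geq 0$. Then $$\chi\big(KG^{r_1 r_2}(n,k,s)\big) \geq \left\lceil \frac{n - r_1 r_2(k-s-1)}{r_1 r_2-1} \right\rceil$$ holds for all non-negative integers $n,k,s$ satisfying $n \geq r_1 r_2(k-1)+1$ and $k > s \geq 0$.
   Context: For a positive integer $n$, $[n]=\{1,\ldots,n\}$. A hypergraph $\mathcal{H}=(V,E)$ consists of a finite vertex set $V$ and a set $E$ of non-empty subsets of $V$ (edges). A proper $m$-coloring of $\mathcal{H}$ is a map $c:V\to\{1,\ldots,m\}$ such that no edge is monochromatic, i.e. $|c(e)|\geq 2$ for every edge $e$. The chromatic number $\chi(\mathcal{H})$ is the least $m$ for which a proper $m$-coloring exists. The generalized Kneser hypergraph $KG^{r}(n,k,s)$ has as vertices all $k$-element subsets of $[n]$, and its edges are the sets $\{X_1,\ldots,X_r\}$ of $r$ distinct vertices such that $|X_i\cap X_j|\leq s$ for all $i\neq j$. *)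

(* Defs.v *)
From mathcomp Require Import all_boot.
Set Implicit Arguments. Unset Strict Implicit. Unset Printing Implicit Defensive.

(* [n] is represented by 'I_n (elements 0..n-1); vertices of KG^r(n,k,s)
   are the k-element sets X : {set 'I_n}. *)

Definition kg_edge (n k s r : nat) (E : {set {set 'I_n}}) : bool :=
  [&& #|E| == r,
      [forall X in E, #|X| == k] &
      [forall X in E, forall Y in E, (X != Y) ==> (#|X :&: Y| <= s)]].

(* c is a proper coloring of KG^r(n,k,s) with colors 'I_m (i.e. m colors):
   no edge is monochromatic.  (Colors on non-vertices are irrelevant.) *)
Definition kg_proper (n k s r m : nat) (c : {ffun {set 'I_n} -> 'I_m}) : bool :=
  [forall E : {set {set 'I_n}},
     kg_edge k s r E ==> [exists X in E, exists Y in E, c X != c Y]].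

Definition kg_colorable (n k s r m : nat) : bool :=
  [exists c : {ffun {set 'I_n} -> 'I_m}, kg_proper k s r c].

(* The search range 0..#|{set 'I_n}| suffices whenever r >= 2 (colour every
   set differently); if no m in range works (only possible for r <= 1),
   the value is #|{set 'I_n}|.+1. *)
Definition kg_chi (n k s r : nat) : nat :=
  find (kg_colorable n k s r) (iota 0 (#|{set 'I_n}|.+1)).

Definition ceil_div (a b : nat) : nat := (a + b - 1) %/ b.

(* Main.v *)
Require Import Defs.
From mathcomp Require Import all_boot.
From mathcomp Require Import zify.
Set Implicit Arguments. Unset Strict Implicit. Unset Printing Implicit Defensive.

Lemma ceil_lt a b m : 0 < b -> (m < ceil_div a b) = (m * b < a).
Proof.
move=> hb; rewrite /ceil_div leq_divRL //.
apply/idP/idP => H; lia.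
Qed.

Lemma chi_lt (n k s r m : nat) : m < kg_chi n k s r -> ~~ kg_colorable n k s r m.
Proof.
move=> H.
have Hs : m < size (iota 0 #|{set 'I_n}|.+1).
  exact: leq_trans H (find_size _ _).
have := before_find 0 H; rewrite nth_iota ?add0n; last by rewrite size_iota in Hs.
by move=> ->.
Qed.

Lemma chi_ge (n k s r c : nat) : c <= #|{set 'I_n}|.+1 ->
  (forall m, m < c -> ~~ kg_colorable n k s r m) -> c <= kg_chi n k s r.
Proof.
move=> hc H; rewrite leqNgt; apply/negP => lt.
rewrite /kg_chi in lt.
have := find_size (kg_colorable n k s r) (iota 0 #|{set 'I_n}|.+1).
rewrite size_iota leq_eqVlt => /orP[/eqP E|L].
  by rewrite E in lt; move: (leq_trans lt hc); rewrite ltnn.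
have hh : has (kg_colorable n k s r) (iota 0 #|{set 'I_n}|.+1).
  by rewrite has_find size_iota.
have := nth_find 0 hh; rewrite nth_iota // add0n => Hc.
by move: (H _ lt); rewrite Hc.
Qed.

Lemma not_proper n k s r m (c : {ffun {set 'I_n} -> 'I_m}) :
  ~~ kg_proper k s r c ->
  exists E, kg_edge k s r E /\ (forall X Y, X \in E -> Y \in E -> c X = c Y).
Proof.
case/forallPn => E; rewrite negb_imply => /andP[He Hn].
exists E; split => // X Y hX hY; apply/eqP.
move: Hn; rewrite negb_exists_in => /forall_inP /(_ X hX).
by rewrite negb_exists_in => /forall_inP /(_ Y hY); rewrite negbK.
Qed.

Lemma inner n K k s r m (c : {ffun {set 'I_n} -> 'I_m}) (Y : {set 'I_n}) :
  #|Y| = K -> ~~ kg_colorable K k s r m ->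
  exists E, [/\ kg_edge k s r E, (forall X, X \in E -> X \subset Y) &
     (forall X Z, X \in E -> Z \in E -> c X = c Z)].
Proof.
move=> hY hnc.
pose f (i : 'I_K) : 'I_n := enum_val (cast_ord (esym hY) i).
have finj : injective f.
  move=> i j /enum_val_inj/(congr1 val) => /= hij; exact: val_inj.
pose c' : {ffun {set 'I_K} -> 'I_m} := [ffun X : {set 'I_K} => c (f @: X)].
have : ~~ kg_proper k s r c' by move: hnc; rewrite /kg_colorable negb_exists => /forallP.
case/not_proper => E' [He' Hc'].
have finj2 : injective (fun X : {set 'I_K} => f @: X) by apply: imset_inj.
exists ((fun X : {set 'I_K} => f @: X) @: E'); split.
- case/and3P: He' => /eqP hc /forall_inP hk /forall_inP hp.
  apply/and3P; split.
  + by rewrite card_imset // hc.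
  + apply/forall_inP => X /imsetP[X' hX' ->]; rewrite card_imset //; exact: hk.
  + apply/forall_inP => X /imsetP[X' hX' ->]; apply/forall_inP => Z /imsetP[Z' hZ' ->].
    apply/implyP => hne.
    rewrite -imsetI; last by move=> x y _ _; apply: finj.
    rewrite card_imset //.
    have := forall_inP (hp _ hX') _ hZ'; move/implyP; apply.
    by apply: contraNneq hne => ->.
- move=> X /imsetP[X' _ ->]; apply/subsetP => x /imsetP[i _ ->].
  by rewrite /f; have := enum_valP (cast_ord (esym hY) i).
- move=> X Z /imsetP[X' hX' ->] /imsetP[Z' hZ' ->].
  by have := Hc' _ _ hX' hZ'; rewrite !ffunE.
Qed.

Lemma combine n K k s r1 r2 m (c : {ffun {set 'I_n} -> 'I_m}) :
  0 < m -> 2 <= r2 -> s < k -> k <= K ->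
  kg_proper k s (r1 * r2) c ->
  ~~ kg_colorable n K s r1 m ->
  (forall Y : {set 'I_n}, #|Y| = K ->
     exists E, [/\ kg_edge k s r2 E, (forall X, X \in E -> X \subset Y) &
     (forall X Z, X \in E -> Z \in E -> c X = c Z)]) -> False.
Proof.
move=> hm hr2 hsk hkK hprop hnc Hin.
pose j0 : 'I_m := Ordinal hm.
pose P (Y : {set 'I_n}) (j : 'I_m) (E : {set {set 'I_n}}) :=
  kg_edge k s r2 E && [forall X in E, (X \subset Y) && (c X == j)].
pose d : {ffun {set 'I_n} -> 'I_m} := [ffun Y => odflt j0 [pick j | [exists E, P Y j E]]].
have Hd : forall Y : {set 'I_n}, #|Y| = K -> exists E, P Y (d Y) E.
  move=> Y /Hin [E [hE hS hC]].
  have : 0 < #|E| by case/and3P: hE => /eqP -> _ _; lia.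
  case/card_gt0P => X0 hX0.
  have ex : [exists E, P Y (c X0) E].
    apply/existsP; exists E; rewrite /P hE /=; apply/forall_inP => X hX.
    by rewrite hS //= (hC X X0).
  rewrite /d ffunE; case: pickP => [j /existsP[E' hE'] | H0]; first by exists E'.
  by move: (H0 (c X0)); rewrite ex.
pose eY (Y : {set 'I_n}) := odflt set0 [pick E : {set {set 'I_n}} | P Y (d Y) E].
have HeY : forall Y : {set 'I_n}, #|Y| = K -> P Y (d Y) (eY Y).
  move=> Y /Hd [E hE]; rewrite /eY; case: pickP => [E' //|H0].
  by move: (H0 E); rewrite hE.
have : ~~ kg_proper K s r1 d by move: hnc; rewrite /kg_colorable negb_exists => /forallP.
case/not_proper => F [hF hFc].
case/and3P: hF => /eqP hFcard /forall_inP hFK /forall_inP hFp.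
have HF : forall Y, Y \in F -> P Y (d Y) (eY Y) by move=> Y hY; apply: HeY; apply/eqP; apply: hFK.
have HFe : forall Y, Y \in F -> kg_edge k s r2 (eY Y) by move=> Y hY; case/andP: (HF Y hY).
have HFs : forall Y X, Y \in F -> X \in eY Y -> (X \subset Y) && (c X == d Y).
  by move=> Y X /HF /andP[_ /forall_inP H] /H.
have HFi : forall Y Z, Y \in F -> Z \in F -> Y != Z -> #|Y :&: Z| <= s.
  by move=> Y Z hY hZ hne; have := forall_inP (hFp _ hY) _ hZ; move/implyP; apply.
have Hk : forall Y X, Y \in F -> X \in eY Y -> #|X| = k.
  move=> Y X hY hX; case/and3P: (HFe Y hY) => _ /forall_inP H _; exact/eqP/H.
pose G (Y : {set 'I_n}) := if Y \in F then eY Y else set0.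
pose E := \bigcup_Y G Y.
have memE : forall X, X \in E -> exists2 Y, Y \in F & X \in eY Y.
  move=> X /bigcupP[Y _]; rewrite /G; case: (Y \in F) /idP => hY hX; [by exists Y | by rewrite in_set0 in hX].
have distinct : forall Y Z X, Y \in F -> Z \in F -> X \in eY Y -> X \in eY Z -> Y = Z.
  move=> Y Z X hY hZ hXY hXZ; apply/eqP; apply: contraT => hne.
  have := HFi _ _ hY hZ hne.
  case/andP: (HFs _ _ hY hXY) => sY _; case/andP: (HFs _ _ hZ hXZ) => sZ _.
  have : #|X| <= #|Y :&: Z| by apply: subset_leq_card; rewrite subsetI sY sZ.
  rewrite (Hk _ _ hY hXY); lia.
have hE : kg_edge k s (r1 * r2) E.
  apply/and3P; split.
  + rewrite -sum1_card partition_disjoint_bigcup; last first.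
      move=> Y Z hne; rewrite /G disjoint_subset; apply/subsetP => X hX1; rewrite inE; apply/negP => hX2.
      move: hX1 hX2; case: ifP => hY; last by rewrite in_set0.
      case: ifP => hZ; last by rewrite in_set0.
      move=> hX1 hX2; move/eqP: hne; apply; exact: (distinct _ _ X).
    rewrite (eq_bigr (fun Y => if Y \in F then r2 else 0)); last first.
      move=> Y _; rewrite sum1_card /G; case: ifP => hY; last by rewrite cards0.
      by case/and3P: (HFe Y hY) => /eqP.
    by rewrite -big_mkcond /= sum_nat_const hFcard mulnC.
  + apply/forall_inP => X /memE [Y hY hX]; apply/eqP; exact: Hk hX.
  + apply/forall_inP => X /memE [Y hY hX]; apply/forall_inP => Z /memE [Y' hY' hZ].
    apply/implyP => hne.
    have [eYY'|neYY'] := eqVneq Y Y'.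
      subst Y'; case/and3P: (HFe Y hY) => _ _ /forall_inP H.
      by have := forall_inP (H _ hX) _ hZ; move/implyP; apply.
    apply: leq_trans (HFi _ _ hY hY' neYY').
    apply: subset_leq_card; apply: setISS.
    by case/andP: (HFs _ _ hY hX). by case/andP: (HFs _ _ hY' hZ).
have := forallP hprop E; rewrite hE /=.
case/exists_inP => X hX /exists_inP [Z hZ]; apply/negP; rewrite negbK.
case/memE: hX => Y hY hXY; case/memE: hZ => Y' hY' hZY'.
case/andP: (HFs _ _ hY hXY) => _ /eqP ->; case/andP: (HFs _ _ hY' hZY') => _ /eqP ->.
by rewrite (hFc _ _ hY hY').
Qed.

Lemma e1 A B m : 1 <= A -> 1 <= B -> m*(A*B-1) = A*((B-1)*m) + (A-1)*m.
Proof. move=> hA hB. case: A hA => // a _; case: B hB => // b _. rewrite !subn1 /=. nia. Qed.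
Lemma e2 A B m t : 1 <= B -> A*((B-1)*m + B*t + 1 - 1) = A*((B-1)*m) + A*B*t.
Proof. move=> hB. rewrite addnK; nia. Qed.
Lemma e3 A B s t : 1 <= B -> A*(B*(s+t)+1-s-1) + A*s = A*B*(s+t).
Proof. move=> hB. case: B hB => // b _. have -> : b.+1*(s+t)+1-s-1 = t + b*(s+t) by rewrite mulSn; lia. nia. Qed.
Lemma e4 A B m s : s <= m -> A*((B-1)*s) <= A*((B-1)*m).
Proof. move=> h; by rewrite leq_mul2l leq_mul2l h !orbT. Qed.
Lemma e5 A B s : 1 <= B -> A*((B-1)*s) + A*s = A*B*s.
Proof. move=> hB. case: B hB => // b _. rewrite subn1 /=. nia. Qed.
Lemma arith A B m s t n K : 2<=A -> 2<=B -> m*(A*B-1) < n - A*B*t -> A*B*(s+t)+1 <= n ->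
 ((K = (B-1)*m + B*t+1 /\ B*(s+t)+1 <= K) \/ (K = B*(s+t)+1 /\ (B-1)*m + B*t+1 <= K)) ->
 A*(K-1)+1 <= n /\ m*(A-1) < n - A*(K-s-1).
Proof.
move=> hA hB hm hn [[hK hK2]|[hK hK2]].
- have E1 := @e1 A B m (ltnW hA) (ltnW hB).
  have E2 : A*(K-1) = A*((B-1)*m) + A*B*t by rewrite hK e2 // ltnW.
  have E3 : A*(K-s-1) <= A*(K-1) by rewrite leq_mul2l; apply/orP; right; lia.
  rewrite [m * (A-1)]mulnC.
  move: E1 E2 E3 hm hn; clear; lia.
- have E2 : A*(K-1) = A*B*(s+t) by rewrite hK addnK mulnA.
  have E3 : A*(K-s-1) + A*s = A*B*(s+t) by rewrite hK e3 // ltnW.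
  have E1 := @e1 A B m (ltnW hA) (ltnW hB).
  have E5 := @e5 A B s (ltnW hB).
  have E6 : A*B*(s+t) = A*B*s + A*B*t by rewrite mulnDr.
  rewrite [m * (A-1)]mulnC.
  case: (leqP s m) => hsm.
    have E4 := @e4 A B m s hsm.
    move: E1 E2 E3 E4 E5 E6 hm hn; clear; lia.
  have E7 : (A-1)*m <= A*m by rewrite leq_mul2r leq_subr orbT.
  have E8 : A*m < A*s by rewrite ltn_pmul2l //; lia.
  move: E2 E3 E6 E7 E8 hn; clear; lia.
Qed.

Theorem lemma3 (r1 r2 : nat) (hr1 : 2 <= r1) (hr2 : 2 <= r2)
  (H1 : forall n k s : nat, r1 * (k - 1) + 1 <= n -> s < k ->
          ceil_div (n - r1 * (k - s - 1)) (r1 - 1) <= kg_chi n k s r1)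
  (H2 : forall n k s : nat, r2 * (k - 1) + 1 <= n -> s < k ->
          ceil_div (n - r2 * (k - s - 1)) (r2 - 1) <= kg_chi n k s r2) :
  forall n k s : nat, (r1 * r2) * (k - 1) + 1 <= n -> s < k ->
    ceil_div (n - (r1 * r2) * (k - s - 1)) (r1 * r2 - 1) <= kg_chi n k s (r1 * r2).
Proof.
move=> n k s hn hsk.
have hr : 0 < r1 * r2 - 1 by nia.
apply: chi_ge.
  have h1 : ceil_div (n - r1 * r2 * (k - s - 1)) (r1 * r2 - 1) <= n.
    rewrite leqNgt ceil_lt //; nia.
  have := @leq_card _ _ (fun x : 'I_n => [set x]) (@set1_inj _).
  rewrite card_ord => h2; apply: (leq_trans h1); apply: leq_trans h2 _; exact: leqnSn.
move=> m; rewrite ceil_lt // => hm.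
apply/negP => /existsP[col hcol].
case: m hm col hcol => [|m'] hm col hcol.
  by case: (col set0).
set m := m'.+1 in hm col hcol *.
have hm0 : 0 < m by [].
pose K := maxn ((r2-1)*m + r2*(k-s-1)+1) (r2*(k-1)+1).
have hKk : k <= K.
  have : r2 * (k - 1) + 1 <= K by rewrite leq_maxr.
  nia.
have hnc2 : ~~ kg_colorable K k s r2 m.
  apply: chi_lt; apply: leq_trans (H2 K k s _ hsk); last by rewrite leq_maxr.
  rewrite ceil_lt; last by lia.
  have : (r2 - 1) * m + r2 * (k - s - 1) + 1 <= K by rewrite leq_maxl.
  nia.
have [t ht] : exists t, k = s + t + 1 by exists (k - s - 1); lia.
have ekt : k - s - 1 = t by lia.
have ek1 : k - 1 = s + t by lia.
rewrite ekt in hm.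
have hKc : (K = (r2-1)*m + r2*t+1 /\ r2*(s+t)+1 <= K) \/ (K = r2*(s+t)+1 /\ (r2-1)*m + r2*t+1 <= K).
  rewrite /K ekt ek1 /maxn; case: ltnP => h; [right|left]; lia.
rewrite ek1 in hn.
have [hA1 hA2] := arith hr1 hr2 hm hn hKc.
have hnc1 : ~~ kg_colorable n K s r1 m.
  apply: chi_lt; apply: leq_trans (H1 n K s _ _); last first.
  - exact: leq_trans hsk hKk.
  - exact: hA1.
  - rewrite ceil_lt; last by lia.
    exact: hA2.
apply: (combine hm0 hr2 hsk hKk hcol hnc1) => Y hY; exact: inner hY hnc2.
Qed.
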